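(* Let $(\mu_0^4,\cdot,[-,-])$ be a transposed Poisson algebra structure on the associative algebra $\mu_0^4$. Then it is isomorphic to one of the following pairwise non-isomorphic algebras: $\mathbf{TP}(1,0,0)$, $\mathbf{TP}(0,\alpha,0)$ with $\alpha\in\mathbb{C}$, or $\mathbf{TP}(0,0,1)$.
   Context: $\mu_0^4$ is the complex commutative associative algebra with basis $\{e_1,\dots,e_4\}$ and $e_i\cdot e_j=e_{i+j}$ for $2\leq i+j\leq 4$, other products zero. A transposed Poisson algebra is a triple $(\mathfrak{L},\cdot,[-,-])$ with $(\mathfrak{L},\cdot)$ commutative associative, $(\mathfrak{L},[-,-])$ a Lie algebra, and $2z\cdot[x,y]=[z\cdot x,y]+[x,z\cdot y]$ for all $x,y,z$. For $\alpha_2,\alpha_3,\alpha_4\in\mathbb{C}$, $\mathbf{TP}(\alpha_2,\alpha_3,\alpha_4)$ denotes $\mu_0^4$ with the bracket $[e_i,e_j]=(j-i)\sum_{t=i+j-1}^{4}\alpha_{t-i-j+3}e_t$ for $3\leq i+j\leq 5$, all other brackets of basis elements zero. Isomorphisms preserve both operations. *)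

(* Defs.v *)
From HB Require Import structures.
From mathcomp Require Import all_boot all_order all_algebra.
From mathcomp Require Import complex.
From mathcomp Require Import Rstruct.
Set Implicit Arguments. Unset Strict Implicit. Unset Printing Implicit Defensive.
Import Order.TTheory GRing.Theory Num.Theory.
Local Open Scope ring_scope.

Notation CC := (complex Rdefinitions.R).

(* underlying vector space C^4; coordinate k (0-indexed) is the coefficient of e_{k+1} *)
Notation Vec := (matrix CC 1 4).

Definition e (i : 'I_4) : Vec := delta_mx 0 i.

(* the product of mu_0^4: e_a e_b = e_{a+b} if a+b <= 4, else 0 *)
Definition mu (x y : Vec) : Vec :=
  \row_(k < 4) \sum_(i < 4) \sum_(j < 4)
     (if (i.+1 + j.+1 == k.+1)%N then x 0 i * y 0 j else 0).

Definition is_TP_bracket (br : Vec -> Vec -> Vec) : Prop :=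
  [/\ (forall (a : CC) x y z, br (a *: x + y) z = a *: br x z + br y z),
      (forall (a : CC) x y z, br z (a *: x + y) = a *: br z x + br z y),
      (forall x, br x x = 0),
      (forall x y z, br x (br y z) + br y (br z x) + br z (br x y) = 0)
    & (forall x y z, 2%:R *: mu z (br x y) = br (mu z x) y + br x (mu z y))].

Definition TP_iso (br1 br2 : Vec -> Vec -> Vec) : Prop :=
  exists f : Vec -> Vec,
    [/\ (forall (a : CC) x y, f (a *: x + y) = a *: f x + f y),
        bijective f,
        (forall x y, f (mu x y) = mu (f x) (f y))
      & (forall x y, f (br1 x y) = br2 (f x) (f y))].

Definition alpha (a2 a3 a4 : CC) (n : nat) : CC :=
  if n == 2 then a2 else if n == 3 then a3 else if n == 4 then a4 else 0.

(* coefficient of e_{k+1} in [e_{i+1}, e_{j+1}] for TP(a2,a3,a4):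
   [e_I, e_J] = (J - I) sum_{t = I+J-1}^{4} alpha_{t-I-J+3} e_t  for 3 <= I+J <= 5 *)
Definition tp_coef (a2 a3 a4 : CC) (i j k : 'I_4) : CC :=
  let s : nat := (i.+1 + j.+1)%N in
  let t : nat := k.+1 in
  if [&& (3 <= s)%N, (s <= 5)%N & (s.-1 <= t)%N]
  then ((j : nat)%:R - (i : nat)%:R) * alpha a2 a3 a4 (t + 3 - s)%N
  else 0.

Definition TPbr (a2 a3 a4 : CC) (x y : Vec) : Vec :=
  \row_(k < 4) \sum_(i < 4) \sum_(j < 4) x 0 i * y 0 j * tp_coef a2 a3 a4 i j k.

(* Main.v *)
Require Import Defs.
From HB Require Import structures.
From mathcomp Require Import all_boot all_order all_algebra.
From mathcomp Require Import complex Rstruct.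
From mathcomp Require Import ring.
Import GRing.Theory Num.Theory.
Local Open Scope ring_scope.

Definition mk4 (a b c d : CC) : Vec := \row_(k < 4) [:: a; b; c; d]`_k.
Definition o0 : 'I_4 := @Ordinal 4 0 isT.
Definition o1 : 'I_4 := @Ordinal 4 1 isT.
Definition o2 : 'I_4 := @Ordinal 4 2 isT.
Definition o3 : 'I_4 := @Ordinal 4 3 isT.

Lemma vecE (x : Vec) : x = mk4 (x 0 o0) (x 0 o1) (x 0 o2) (x 0 o3).
Proof.
apply/rowP => k; rewrite mxE; case: k => [[|[|[|[|k]]]] Hk] //=;
  congr (x _ _); apply: val_inj => //.
Qed.

Lemma mu_mk4 a b c d a' b' c' d' :
  mu (mk4 a b c d) (mk4 a' b' c' d') =
  mk4 0 (a*a') (a*b' + b*a') (a*c' + b*b' + c*a').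
Proof.
apply/rowP => k; rewrite !mxE.
case: k => [[|[|[|[|k]]]] Hk] //=;
rewrite !big_ord_recr !big_ord0 /= ?mxE /=.
all: ring.
Qed.

Lemma TPbr_mk4 a2 a3 a4 x0 x1 x2 x3 y0 y1 y2 y3 :
  TPbr a2 a3 a4 (mk4 x0 x1 x2 x3) (mk4 y0 y1 y2 y3) =
  mk4 0 (a2 * (x0*y1 - x1*y0))
        (a3 * (x0*y1 - x1*y0) + 2%:R * a2 * (x0*y2 - x2*y0))
        (a4 * (x0*y1 - x1*y0) + 2%:R * a3 * (x0*y2 - x2*y0)
           + 3%:R * a2 * (x0*y3 - x3*y0) + a2 * (x1*y2 - x2*y1)).
Proof.
apply/rowP => k; rewrite !mxE.
case: k => [[|[|[|[|k]]]] Hk] //=;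
rewrite !big_ord_recr !big_ord0 /= ?mxE /tp_coef /alpha /=; ring.
Qed.

Lemma mk4E a b c d : [/\ mk4 a b c d 0 o0 = a, mk4 a b c d 0 o1 = b,
   mk4 a b c d 0 o2 = c & mk4 a b c d 0 o3 = d].
Proof. by rewrite !mxE. Qed.

Lemma lin_mk4 (k a b c d a' b' c' d' : CC) :
  k *: mk4 a b c d + mk4 a' b' c' d' = mk4 (k*a+a') (k*b+b') (k*c+c') (k*d+d').
Proof.
apply/rowP => i; rewrite !mxE.
by case: i => [[|[|[|[|i]]]] Hi].
Qed.

Definition fmapc (p1 p2 p3 x0 x1 x2 x3 : CC) : Vec :=
  mk4 (x0 * p1) (x0 * p2 + x1 * p1^+2) (x0 * p3 + 2%:R * x1 * p1 * p2 + x2 * p1^+3)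
      (x1 * (2%:R * p1 * p3 + p2^+2) + 3%:R * x2 * p1^+2 * p2 + x3 * p1^+4).
Definition fmap p1 p2 p3 (x : Vec) : Vec :=
  fmapc p1 p2 p3 (x 0 o0) (x 0 o1) (x 0 o2) (x 0 o3).
Definition ginvc (p1 p2 p3 y0 y1 y2 y3 : CC) : Vec :=
  let x0 := y0 / p1 in
  let x1 := (y1 - x0 * p2) / p1^+2 in
  let x2 := (y2 - x0 * p3 - 2%:R * x1 * p1 * p2) / p1^+3 in
  let x3 := (y3 - x1 * (2%:R * p1 * p3 + p2^+2) - 3%:R * x2 * p1^+2 * p2) / p1^+4 in
  mk4 x0 x1 x2 x3.
Definition ginv p1 p2 p3 (x : Vec) : Vec :=
  ginvc p1 p2 p3 (x 0 o0) (x 0 o1) (x 0 o2) (x 0 o3).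

Lemma fmap_mk4 p1 p2 p3 a b c d :
  fmap p1 p2 p3 (mk4 a b c d) = fmapc p1 p2 p3 a b c d.
Proof. by rewrite /fmap !mxE. Qed.
Lemma ginv_mk4 p1 p2 p3 a b c d :
  ginv p1 p2 p3 (mk4 a b c d) = ginvc p1 p2 p3 a b c d.
Proof. by rewrite /ginv !mxE. Qed.

Lemma two_neq0 : (2%:R : CC) != 0.
Proof. by rewrite pnatr_eq0. Qed.
Lemma three_neq0 : (3%:R : CC) != 0.
Proof. by rewrite pnatr_eq0. Qed.

Lemma iso_gen (a2 a3 a4 b2 b3 b4 p1 p2 p3 : CC) : p1 != 0 ->
  a2 = b2 * p1 -> a3 * p1 = 2%:R * b2 * p2 + b3 * p1 ->
  a3 * p2 + a4 * p1^+2 = 3%:R * b2 * p3 + 2%:R * b3 * p2 + b4 * p1 ->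
  TP_iso (TPbr a2 a3 a4) (TPbr b2 b3 b4).
Proof.
move=> p10 H0 H1 H2.
have E3 : a3 = (2%:R * b2 * p2 + b3 * p1) / p1 by rewrite -H1; field.
have E4 : a4 = (3%:R * b2 * p3 + 2%:R * b3 * p2 + b4 * p1 - a3 * p2) / p1^+2
  by rewrite -H2; field.
rewrite E4 E3 H0.
exists (fmap p1 p2 p3); split.
- move=> k x y; rewrite [x]vecE [y]vecE lin_mk4 !fmap_mk4 /fmapc lin_mk4.
  congr mk4; ring.
- exists (ginv p1 p2 p3) => x.
  + rewrite [x]vecE fmap_mk4 /fmapc ginv_mk4 /ginvc; congr mk4; field; done.
  + rewrite [x]vecE ginv_mk4 /ginvc fmap_mk4 /fmapc; congr mk4; field; done.
- move=> x y; rewrite [x]vecE [y]vecE mu_mk4 !fmap_mk4 /fmapc mu_mk4.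
  congr mk4; ring.
- move=> x y; rewrite [x]vecE [y]vecE TPbr_mk4 !fmap_mk4 /fmapc TPbr_mk4.
  congr mk4; field; done.
Qed.

Definition E0 := mk4 1 0 0 0.
Definition E1 := mk4 0 1 0 0.
Definition E2 := mk4 0 0 1 0.
Definition E3 := mk4 0 0 0 1.

Lemma mk4_eq a b c d a' b' c' d' : mk4 a b c d = mk4 a' b' c' d' ->
  [/\ a = a', b = b', c = c' & d = d'].
Proof.
move=> H; have := mk4E a b c d; rewrite H; case: (mk4E a' b' c' d').
by move=> -> -> -> -> [].
Qed.

Lemma sc_mk4 k a b c d : k *: mk4 a b c d = mk4 (k*a) (k*b) (k*c) (k*d).
Proof. by rewrite -[_ *: _]addr0 -[0 : Vec](_ : mk4 0 0 0 0 = 0) ?lin_mk4 ?addr0 //;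
 apply/rowP => i; rewrite !mxE; case: i => [[|[|[|[|i]]]] Hi]. Qed.

Lemma add_mk4 a b c d a' b' c' d' :
  mk4 a b c d + mk4 a' b' c' d' = mk4 (a+a') (b+b') (c+c') (d+d').
Proof. by rewrite -[mk4 a b c d]scale1r lin_mk4 !mul1r. Qed.

Lemma opp_mk4 a b c d : - mk4 a b c d = mk4 (-a) (-b) (-c) (-d).
Proof. by rewrite -scaleN1r sc_mk4 !mulN1r. Qed.

Lemma zero_mk4 : (0 : Vec) = mk4 0 0 0 0.
Proof. by apply/rowP => i; rewrite !mxE; case: i => [[|[|[|[|i]]]] Hi]. Qed.

Lemma mk4_decomp a b c d :
  mk4 a b c d = a *: E0 + (b *: E1 + (c *: E2 + (d *: E3 + 0))).
Proof. rewrite zero_mk4 !lin_mk4; congr mk4; ring. Qed.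

Lemma two_cancel (x : CC) : 2%:R * x = 0 -> x = 0.
Proof. by move/eqP; rewrite mulf_eq0 (negbTE two_neq0) /= => /eqP. Qed.

Section Br.
Variable br : Vec -> Vec -> Vec.
Hypothesis Hbr : is_TP_bracket br.

Lemma br0l z : br 0 z = 0.
Proof.
case: Hbr => H1 _ _ _ _.
by have := H1 (-1) 0 0 z; rewrite scaler0 addr0 scaleN1r addNr.
Qed.
Lemma br0r z : br z 0 = 0.
Proof.
case: Hbr => _ H1 _ _ _.
by have := H1 (-1) 0 0 z; rewrite scaler0 addr0 scaleN1r addNr.
Qed.
Lemma brDl x y z : br (x + y) z = br x z + br y z.
Proof. by case: Hbr => H1 _ _ _ _; have := H1 1 x y z; rewrite !scale1r. Qed.
Lemma brDr x y z : br z (x + y) = br z x + br z y.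
Proof. by case: Hbr => _ H1 _ _ _; have := H1 1 x y z; rewrite !scale1r. Qed.
Lemma brZl a x z : br (a *: x) z = a *: br x z.
Proof. by case: Hbr => H1 _ _ _ _; have := H1 a x 0 z; rewrite !addr0 br0l addr0. Qed.
Lemma brZr a x z : br z (a *: x) = a *: br z x.
Proof. by case: Hbr => _ H1 _ _ _; have := H1 a x 0 z; rewrite !addr0 br0r addr0. Qed.
Lemma br_anti x y : br x y = - br y x.
Proof.
case: Hbr => _ _ H3 _ _.
have := H3 (x + y); rewrite brDl !brDr !H3 addr0 add0r => /eqP.
by rewrite addr_eq0 => /eqP.
Qed.
End Br.


Lemma vecEx (x : Vec) : exists a b c d, x = mk4 a b c d.
Proof. by do 4 eexists; exact: vecE. Qed.

Lemma brvals br : is_TP_bracket br ->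
  exists q1 q2 q3 : CC,
  [/\ br E0 E1 = mk4 0 q1 q2 q3, br E0 E2 = mk4 0 0 (2%:R * q1) (2%:R * q2),
      br E0 E3 = mk4 0 0 0 (3%:R * q1), br E1 E2 = mk4 0 0 0 q1 &
      br E1 E3 = 0 /\ br E2 E3 = 0].
Proof.
move=> Hbr; have H5 := Hbr; case: H5 => _ _ H3 _ H5.
have [q0 [q1 [q2 [q3 Hq]]]] := vecEx (br E0 E1).
have [r0 [r1 [r2 [r3 Hr]]]] := vecEx (br E0 E2).
have [s0 [s1 [s2 [s3 Hs]]]] := vecEx (br E0 E3).
have [t0 [t1 [t2 [t3 Ht]]]] := vecEx (br E1 E2).
have [u0 [u1 [u2 [u3 Hu]]]] := vecEx (br E1 E3).
have [w0 [w1 [w2 [w3 Hw]]]] := vecEx (br E2 E3).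
have A31 : br E3 E1 = - br E1 E3 by apply: (br_anti br Hbr).
have A32 : br E3 E2 = - br E2 E3 by apply: (br_anti br Hbr).
have A21 : br E2 E1 = - br E1 E2 by apply: (br_anti br Hbr).
have M00 : mu E0 E0 = E1 by rewrite mu_mk4; congr mk4; ring.
have M01 : mu E0 E1 = E2 by rewrite mu_mk4; congr mk4; ring.
have M02 : mu E0 E2 = E3 by rewrite mu_mk4; congr mk4; ring.
have M12 : mu E1 E2 = 0 by rewrite mu_mk4 zero_mk4; congr mk4; ring.
have M03 : mu E0 E3 = 0 by rewrite mu_mk4 zero_mk4; congr mk4; ring.
have M20 : mu E2 E0 = E3 by rewrite mu_mk4; congr mk4; ring.
have M10 : mu E1 E0 = E2 by rewrite mu_mk4; congr mk4; ring.
have M11 : mu E1 E1 = E3 by rewrite mu_mk4; congr mk4; ring.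
have M13 : mu E1 E3 = 0 by rewrite mu_mk4 zero_mk4; congr mk4; ring.
have M22 : mu E2 E2 = 0 by rewrite mu_mk4 zero_mk4; congr mk4; ring.
have M21 : mu E2 E1 = 0 by rewrite mu_mk4 zero_mk4; congr mk4; ring.
have e1 := H5 E0 E1 E0. have e2 := H5 E0 E2 E1. have e3 := H5 E0 E1 E2.
have e4 := H5 E0 E2 E2. have e5 := H5 E0 E3 E0. have e6 := H5 E1 E2 E0.
have e7 := H5 E0 E2 E0. have e8 := H5 E0 E1 E1.
have B0l := br0l br Hbr. have B0r := br0r br Hbr.
rewrite ?M00 ?M01 ?M02 ?M12 ?M03 ?M20 ?M10 ?M11 ?M13 ?M22 ?M21 ?H3 ?B0l ?B0r
  ?A31 ?A32 ?A21 ?Hq ?Hr ?Hs ?Ht ?Hu ?Hw ?zero_mk4 ?mu_mk4 ?sc_mk4 ?opp_mk4 ?add_mk4 ?mu_mk4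
  in e1.
rewrite ?M00 ?M01 ?M02 ?M12 ?M03 ?M20 ?M10 ?M11 ?M13 ?M22 ?M21 ?H3 ?B0l ?B0r
  ?A31 ?A32 ?A21 ?Hq ?Hr ?Hs ?Ht ?Hu ?Hw ?zero_mk4 ?mu_mk4 ?sc_mk4 ?opp_mk4 ?add_mk4 ?mu_mk4
  in e2.
rewrite ?M00 ?M01 ?M02 ?M12 ?M03 ?M20 ?M10 ?M11 ?M13 ?M22 ?M21 ?H3 ?B0l ?B0r
  ?A31 ?A32 ?A21 ?Hq ?Hr ?Hs ?Ht ?Hu ?Hw ?zero_mk4 ?mu_mk4 ?sc_mk4 ?opp_mk4 ?add_mk4 ?mu_mk4
  in e3.
rewrite ?M00 ?M01 ?M02 ?M12 ?M03 ?M20 ?M10 ?M11 ?M13 ?M22 ?M21 ?H3 ?B0l ?B0r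
  ?A31 ?A32 ?A21 ?Hq ?Hr ?Hs ?Ht ?Hu ?Hw ?zero_mk4 ?mu_mk4 ?sc_mk4 ?opp_mk4 ?add_mk4 ?mu_mk4
  in e4.
rewrite ?M00 ?M01 ?M02 ?M12 ?M03 ?M20 ?M10 ?M11 ?M13 ?M22 ?M21 ?H3 ?B0l ?B0r
  ?A31 ?A32 ?A21 ?Hq ?Hr ?Hs ?Ht ?Hu ?Hw ?zero_mk4 ?mu_mk4 ?sc_mk4 ?opp_mk4 ?add_mk4 ?mu_mk4
  in e5.
rewrite ?M00 ?M01 ?M02 ?M12 ?M03 ?M20 ?M10 ?M11 ?M13 ?M22 ?M21 ?H3 ?B0l ?B0r
  ?A31 ?A32 ?A21 ?Hq ?Hr ?Hs ?Ht ?Hu ?Hw ?zero_mk4 ?mu_mk4 ?sc_mk4 ?opp_mk4 ?add_mk4 ?mu_mk4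
  in e6.
rewrite ?M00 ?M01 ?M02 ?M12 ?M03 ?M20 ?M10 ?M11 ?M13 ?M22 ?M21 ?H3 ?B0l ?B0r
  ?A31 ?A32 ?A21 ?Hq ?Hr ?Hs ?Ht ?Hu ?Hw ?zero_mk4 ?mu_mk4 ?sc_mk4 ?opp_mk4 ?add_mk4 ?mu_mk4
  in e7.
rewrite ?M00 ?M01 ?M02 ?M12 ?M03 ?M20 ?M10 ?M11 ?M13 ?M22 ?M21 ?H3 ?B0l ?B0r
  ?A31 ?A32 ?A21 ?Hq ?Hr ?Hs ?Ht ?Hu ?Hw ?zero_mk4 ?mu_mk4 ?sc_mk4 ?opp_mk4 ?add_mk4 ?mu_mk4
  in e8.
case/mk4_eq: e1 => e1a e1b e1c e1d.
case/mk4_eq: e2 => e2a e2b e2c e2d.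
case/mk4_eq: e3 => e3a e3b e3c e3d.
case/mk4_eq: e4 => e4a e4b e4c e4d.
case/mk4_eq: e5 => e5a e5b e5c e5d.
case/mk4_eq: e6 => e6a e6b e6c e6d.
case/mk4_eq: e7 => e7a e7b e7c e7d.
case/mk4_eq: e8 => e8a e8b e8c e8d.
rewrite ?mul0r ?mul1r ?mulr0 ?addr0 ?add0r ?mul0r ?mulr0 ?addr0 ?add0r in e1a e1b e1c e1d e2a e2b e2c e2d
  e3a e3b e3c e3d e4a e4b e4c e4d e5a e5b e5c e5d e6a e6b e6c e6d
  e7a e7b e7c e7d e8a e8b e8c e8d.
have r0z : r0 = 0 by rewrite -e1a.
have r1z : r1 = 0 by apply: two_cancel; rewrite e2d.
have q0z : q0 = 0 by apply: two_cancel; rewrite e1b r1z.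
have u0z : u0 = 0 by rewrite -e5a.
have u1z : u1 = 0 by apply/eqP; rewrite -oppr_eq0 -e3b.
have u2z : u2 = 0 by apply/eqP; rewrite -oppr_eq0 -e3c.
have u3z : u3 = 0 by apply/eqP; rewrite -oppr_eq0 -e3d q0z mulr0.
have w0z : w0 = 0 by apply/eqP; rewrite -oppr_eq0 -e4a.
have w1z : w1 = 0 by apply/eqP; rewrite -oppr_eq0 -e4b.
have w2z : w2 = 0 by apply/eqP; rewrite -oppr_eq0 -e4c.
have w3z : w3 = 0 by apply/eqP; rewrite -oppr_eq0 -e4d r0z mulr0.
have s0z : s0 = 0 by apply: two_cancel; rewrite e5b u1z.
have s1z : s1 = 0 by apply: two_cancel; rewrite e5c u2z.
have s2z : s2 = 0 by apply: two_cancel; rewrite e5d u3z.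
have t0z : t0 = 0 by apply: two_cancel; rewrite e6b u1z.
have t1z : t1 = 0 by apply: two_cancel; rewrite e6c u2z.
have t2z : t2 = 0 by apply: two_cancel; rewrite e6d u3z.
have t3e : t3 = q1.
  apply: (mulfI two_neq0).
  have -> : 2%:R * t3 = (t3 + s3) - (-t3 + s3) by ring.
  rewrite -e7d -e8d -e1c; ring.
have s3e : s3 = 3%:R * q1.
  have -> : s3 = (-t3 + s3) + t3 by ring.
  rewrite -e8d t3e; ring.
exists q1, q2, q3; split.
- by rewrite Hq q0z.
- by rewrite Hr r0z r1z e1c e1d.
- by rewrite Hs s0z s1z s2z s3e.
- by rewrite Ht t0z t1z t2z t3e.
- by split; [rewrite Hu u0z u1z u2z u3z zero_mk4 | rewrite Hw w0z w1z w2z w3z zero_mk4].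
Qed.



Lemma br_is_TP br : is_TP_bracket br -> exists q1 q2 q3,
  forall x y, br x y = TPbr q1 q2 q3 x y.
Proof.
move=> Hbr; have [q1 [q2 [q3 [V01 V02 V03 V12 [V13 V23]]]]] := brvals br Hbr.
exists q1, q2, q3 => x y.
have H3 : forall x, br x x = 0 by case: Hbr.
have A10 : br E1 E0 = - br E0 E1 by apply: (br_anti br Hbr).
have A20 : br E2 E0 = - br E0 E2 by apply: (br_anti br Hbr).
have A30 : br E3 E0 = - br E0 E3 by apply: (br_anti br Hbr).
have A21 : br E2 E1 = - br E1 E2 by apply: (br_anti br Hbr).
have A31 : br E3 E1 = - br E1 E3 by apply: (br_anti br Hbr).
have A32 : br E3 E2 = - br E2 E3 by apply: (br_anti br Hbr).
rewrite [x]vecE [y]vecE TPbr_mk4 !mk4_decomp.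
rewrite !(brDl br Hbr) !(brDr br Hbr) !(brZl br Hbr) !(brZr br Hbr)
  !(br0l br Hbr) !(br0r br Hbr).
rewrite !H3 A10 A20 A30 A21 A31 A32 V01 V02 V03 V12 V13 V23.
rewrite !zero_mk4 !opp_mk4 !sc_mk4 !add_mk4; congr mk4; ring.
Qed.


Lemma TP_iso_ext b1 b2 b3 : (forall x y, b1 x y = b2 x y) ->
  TP_iso b2 b3 -> TP_iso b1 b3.
Proof. by move=> E [f [H1 H2 H3 H4]]; exists f; split => // x y; rewrite E. Qed.

Lemma classify br : is_TP_bracket br ->
      TP_iso br (TPbr 1 0 0)
   \/ (exists a : CC, TP_iso br (TPbr 0 a 0))
   \/ TP_iso br (TPbr 0 0 1).
Proof.
move=> Hbr; have [q1 [q2 [q3 E]]] := br_is_TP br Hbr.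
case: (eqVneq q1 0) => [e1|h1]; first rewrite e1 in E.
- case: (eqVneq q2 0) => [e2|h2]; first rewrite e2 in E.
  + case: (eqVneq q3 0) => [e3|h3]; first rewrite e3 in E.
    * right; left; exists 0; apply: (@TP_iso_ext _ _ _ E).
      apply: (@iso_gen _ _ _ _ _ _ 1 0 0); rewrite ?oner_neq0 //; ring.
    * right; right; apply: (@TP_iso_ext _ _ _ E).
      apply: (@iso_gen _ _ _ _ _ _ (q3^-1) 0 0); rewrite ?invr_eq0 //; try ring.
      by field.
  + right; left; exists q2; apply: (@TP_iso_ext _ _ _ E).
    apply: (@iso_gen _ _ _ _ _ _ 1 (q3/q2) 0); rewrite ?oner_neq0 //; try ring.
    by field.
- left; apply: (@TP_iso_ext _ _ _ E).
  apply: (@iso_gen _ _ _ _ _ _ q1 (q1*q2/2%:R) ((q3*q1^+2 + q2*(q1*q2/2%:R))/3%:R));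
    rewrite //; try ring.
  + by field; rewrite ?two_neq0 ?three_neq0 ?h1.
  + by field; rewrite ?two_neq0 ?three_neq0 ?h1.
Qed.


Section Iso.
Variable f : Vec -> Vec.
Hypothesis Hlin : forall (a : CC) x y, f (a *: x + y) = a *: f x + f y.
Hypothesis Hbij : bijective f.
Hypothesis Hmul : forall x y, f (mu x y) = mu (f x) (f y).

Lemma f0 : f 0 = 0.
Proof. by have := Hlin (-1) 0 0; rewrite scaler0 addr0 scaleN1r addNr. Qed.
Lemma fZ a x : f (a *: x) = a *: f x.
Proof. by have := Hlin a x 0; rewrite !addr0 f0 addr0. Qed.

Lemma fE3 : f E3 = mu (mu (f E0) (f E0)) (mu (f E0) (f E0)).
Proof.
have -> : E3 = mu (mu E0 E0) (mu E0 E0) by rewrite !mu_mk4; congr mk4; ring.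
by rewrite !Hmul.
Qed.
Lemma fE2 : f E2 = mu (f E0) (mu (f E0) (f E0)).
Proof.
have -> : E2 = mu E0 (mu E0 E0) by rewrite !mu_mk4; congr mk4; ring.
by rewrite !Hmul.
Qed.
Lemma fE1 : f E1 = mu (f E0) (f E0).
Proof.
have -> : E1 = mu E0 E0 by rewrite !mu_mk4; congr mk4; ring.
by rewrite !Hmul.
Qed.

Lemma fE3_neq0 : f E3 != 0.
Proof.
apply/eqP; rewrite -f0 => /(bij_inj Hbij).
by rewrite zero_mk4 => /mk4_eq [_ _ _ /eqP]; rewrite oner_eq0.
Qed.

Lemma u0_neq0 : f E0 0 o0 != 0.
Proof.
apply/eqP => h; have := fE3_neq0; rewrite fE3 [f E0]vecE h !mu_mk4.
by rewrite zero_mk4 !(mul0r, mulr0, addr0, add0r) eqxx.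
Qed.
End Iso.

Lemma lin1 (A B C D k : CC) : A = B -> C - D = k * (A - B) -> C = D.
Proof. by move=> ->; rewrite subrr mulr0 => /eqP; rewrite subr_eq0 => /eqP. Qed.
Lemma lin2 (A B A' B' C D k k' : CC) : A = B -> A' = B' ->
  C - D = k * (A - B) + k' * (A' - B') -> C = D.
Proof.
by move=> -> ->; rewrite !subrr !mulr0 addr0 => /eqP; rewrite subr_eq0 => /eqP.
Qed.

Lemma not_iso100 br2 : (forall x y, exists c d, br2 x y = mk4 0 0 c d) ->
  ~ TP_iso (TPbr 1 0 0) br2.
Proof.
move=> Hb [f [Hlin Hbij Hmul Hbr]].
have e : TPbr 1 0 0 E0 E1 = E1 by rewrite TPbr_mk4; congr mk4; ring.
have := Hbr E0 E1; rewrite e; have [c [d ->]] := Hb (f E0) (f E1) => h.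
have := fE3_neq0 f Hlin Hbij.
by rewrite (fE3 f Hmul) -(fE1 f Hmul) h !mu_mk4 zero_mk4 !(mul0r, mulr0, addr0) eqxx.
Qed.


Lemma img0 a3 a4 x y : exists c d, TPbr 0 a3 a4 x y = mk4 0 0 c d.
Proof.
rewrite [x]vecE [y]vecE TPbr_mk4; do 2 eexists; congr mk4; ring.
Qed.

Lemma not_iso001 a : ~ TP_iso (TPbr 0 0 1) (TPbr 0 a 0).
Proof.
move=> [f [Hlin Hbij Hmul Hbr]].
have e : TPbr 0 0 1 E0 E1 = E3 by rewrite TPbr_mk4; congr mk4; ring.
have h := Hbr E0 E1; rewrite e (fE3 f Hmul) -(fE1 f Hmul) in h.
have nz := u0_neq0 f Hlin Hbij Hmul.
move: h nz; rewrite (fE1 f Hmul).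
case: (vecEx (f E0)) => [u0 [u1 [u2 [u3 ->]]]]; rewrite !mxE /=.
rewrite !mu_mk4 TPbr_mk4 => /mk4_eq [_ _ h2 h3] nz.
have : u0 ^+ 7 = 0.
  apply: (@lin2 _ _ _ _ _ _ (- (4%:R * u0^+2 * u1)) (u0^+3) h2 h3); ring.
by move/eqP; rewrite expf_eq0 (negbTE nz) andbF.
Qed.

Lemma iso0a0 a b : TP_iso (TPbr 0 a 0) (TPbr 0 b 0) -> a = b.
Proof.
move=> [f [Hlin Hbij Hmul Hbr]].
have e : TPbr 0 a 0 E0 E1 = a *: E2 by rewrite TPbr_mk4 sc_mk4; congr mk4; ring.
have h := Hbr E0 E1; rewrite e (fZ f Hlin) (fE2 f Hmul) -(fE1 f Hmul) in h.
have nz := u0_neq0 f Hlin Hbij Hmul.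
move: h nz; rewrite (fE1 f Hmul).
case: (vecEx (f E0)) => [u0 [u1 [u2 [u3 ->]]]]; rewrite !mxE /=.
rewrite !mu_mk4 TPbr_mk4 sc_mk4 => /mk4_eq [_ _ h2 _] nz.
have : (a - b) * u0 ^+ 3 = 0.
  apply: (@lin1 _ _ _ _ 1 h2); ring.
move/eqP; rewrite mulf_eq0 expf_eq0 (negbTE nz) andbF orbF subr_eq0.
by move/eqP.
Qed.


Theorem mainTheorem4 :
  (forall br : Vec -> Vec -> Vec, is_TP_bracket br ->
      TP_iso br (TPbr 1 0 0)
   \/ (exists a : CC, TP_iso br (TPbr 0 a 0))
   \/ TP_iso br (TPbr 0 0 1))
  /\ ~ TP_iso (TPbr 1 0 0) (TPbr 0 0 1)
  /\ (forall a : CC, ~ TP_iso (TPbr 1 0 0) (TPbr 0 a 0))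
  /\ (forall a : CC, ~ TP_iso (TPbr 0 0 1) (TPbr 0 a 0))
  /\ (forall a b : CC, TP_iso (TPbr 0 a 0) (TPbr 0 b 0) -> a = b).
Proof.
split; first exact: classify.
split; first by apply: not_iso100 => x y; exact: img0.
split; first by move=> a; apply: not_iso100 => x y; exact: img0.
split; first exact: not_iso001.
exact: iso0a0.
Qed.
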